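(* Let $\mathcal{Q}$ be a congruence permutable quasivariety of algebras (i.e. $\alpha\circ\beta=\beta\circ\alpha$ for all congruences $\alpha,\beta$ of every algebra in $\mathcal{Q}$). Then the class of all lattices embeddable into the congruence lattice of some algebra in $\mathcal{Q}$ is a quasivariety.
   Context: A quasivariety is a class of structures axiomatizable by quasi-identities (equivalently, containing the trivial structure and closed under isomorphic copies, substructures, direct products and ultraproducts). *)

(* Defs.v *)
From Stdlib Require Import Fin.

Record signature := Signature { op : Type ; arity : op -> nat }.

Record algebra (S : signature) := Algebra {
  carrier :> Type ;
  interp : forall o : op S, (Fin.t (arity S o) -> carrier) -> carrier }.
Arguments carrier {S} _.
Arguments interp {S} _ _ _.

Definition is_hom {S} (A B : algebra S) (h : A -> B) : Prop :=
  forall (o : op S) (args : Fin.t (arity S o) -> A),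
    h (interp A o args) = interp B o (fun k => h (args k)).

Definition injective {X Y : Type} (f : X -> Y) := forall x y, f x = f y -> x = y.
Definition surjective {X Y : Type} (f : X -> Y) := forall y, exists x, f x = y.

Definition isomorphic {S} (A B : algebra S) : Prop :=
  exists h : A -> B, is_hom A B h /\ injective h /\ surjective h.

Definition prod_alg {S} {I : Type} (A : I -> algebra S) : algebra S :=
  @Algebra S (forall i, A i)
    (fun o args => fun i => interp (A i) o (fun k => args k i)).

Definition ultrafilter {I : Type} (U : (I -> Prop) -> Prop) : Prop :=
  U (fun _ => True) /\
  ~ U (fun _ => False) /\
  (forall X Y : I -> Prop, U X -> (forall i, X i -> Y i) -> U Y) /\
  (forall X Y : I -> Prop, U X -> U Y -> U (fun i => X i /\ Y i)) /\
  (forall X : I -> Prop, U X \/ U (fun i => ~ X i)).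

Definition alg_class (S : signature) := algebra S -> Prop.

Definition quasivariety {S} (K : alg_class S) : Prop :=
  (forall T : algebra S, (exists t : T, forall x : T, x = t) -> K T) /\
  (forall A B : algebra S, K A -> isomorphic A B -> K B) /\
  (* substructures (up to isomorphism: algebras embeddable into a member) *)
  (forall (A B : algebra S) (h : B -> A),
      K A -> inhabited B -> is_hom B A h -> injective h -> K B) /\
  (forall (I : Type) (A : I -> algebra S), (forall i, K (A i)) -> K (prod_alg A)) /\
  (* ultraproducts: B is (isomorphic to) prod A / U, given as the image of a
     surjective homomorphism whose kernel is the ultrafilter equivalence *)
  (forall (I : Type) (A : I -> algebra S) (U : (I -> Prop) -> Prop),
      ultrafilter U -> (forall i, K (A i)) ->
      forall (B : algebra S) (h : prod_alg A -> B),
        is_hom (prod_alg A) B h -> surjective h ->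
        (forall f g : prod_alg A, h f = h g <-> U (fun i => f i = g i)) ->
        K B).

Definition is_congruence {S} (A : algebra S) (th : A -> A -> Prop) : Prop :=
  (forall x, th x x) /\
  (forall x y, th x y -> th y x) /\
  (forall x y z, th x y -> th y z -> th x z) /\
  (forall (o : op S) (a b : Fin.t (arity S o) -> A),
      (forall k, th (a k) (b k)) -> th (interp A o a) (interp A o b)).

Definition rel_comp {X : Type} (al be : X -> X -> Prop) : X -> X -> Prop :=
  fun x y => exists z, al x z /\ be z y.

Definition congruence_permutable {S} (A : algebra S) : Prop :=
  forall al be : A -> A -> Prop, is_congruence A al -> is_congruence A be ->
    forall x y, rel_comp al be x y <-> rel_comp be al x y.

Definition con_meet {S} (A : algebra S) (al be : A -> A -> Prop) : A -> A -> Prop :=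
  fun x y => al x y /\ be x y.
Definition con_join {S} (A : algebra S) (al be : A -> A -> Prop) : A -> A -> Prop :=
  fun x y => forall ga : A -> A -> Prop, is_congruence A ga ->
    (forall u v, al u v -> ga u v) -> (forall u v, be u v -> ga u v) -> ga x y.

(** The signature of lattices: [true] = join, [false] = meet, both binary. *)
Definition lattice_sig : signature := @Signature bool (fun _ => 2).

Definition pair2 {T : Type} (x y : T) : Fin.t 2 -> T :=
  fun k => match k with Fin.F1 => x | Fin.FS _ => y end.

Definition ljoin (L : algebra lattice_sig) (x y : L) : L := interp L true (pair2 x y).
Definition lmeet (L : algebra lattice_sig) (x y : L) : L := interp L false (pair2 x y).

Definition is_lattice (L : algebra lattice_sig) : Prop :=
  (forall x y : L, ljoin L x y = ljoin L y x) /\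
  (forall x y : L, lmeet L x y = lmeet L y x) /\
  (forall x y z : L, ljoin L x (ljoin L y z) = ljoin L (ljoin L x y) z) /\
  (forall x y z : L, lmeet L x (lmeet L y z) = lmeet L (lmeet L x y) z) /\
  (forall x y : L, ljoin L x (lmeet L x y) = x) /\
  (forall x y : L, lmeet L x (ljoin L x y) = x).

(** Lattice embedding of L into Con A; congruences are represented as
    relations, compared extensionally. *)
Definition embeds_into_Con {S} (L : algebra lattice_sig) (A : algebra S) : Prop :=
  exists f : L -> (A -> A -> Prop),
    (forall x, is_congruence A (f x)) /\
    (forall x y, (forall a b, f x a b <-> f y a b) -> x = y) /\
    (forall x y a b, f (ljoin L x y) a b <-> con_join A (f x) (f y) a b) /\
    (forall x y a b, f (lmeet L x y) a b <-> con_meet A (f x) (f y) a b).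

Definition Lcon {S} (Q : alg_class S) : alg_class lattice_sig :=
  fun L => is_lattice L /\ exists A : algebra S, Q A /\ embeds_into_Con L A.

(* Main.v *)
Require Import Defs.
From Stdlib Require Import Fin Classical FunctionalExtensionality ProofIrrelevance ClassicalEpsilon PropExtensionality.

Definition relext {X} (r s : X -> X -> Prop) := forall a b, r a b <-> s a b.

Lemma pair2_map {T U} (h : T -> U) (x y : T) :
  (fun k => h (pair2 x y k)) = pair2 (h x) (h y).
Proof.
  apply functional_extensionality; intro k.
  apply (Fin.caseS' k (fun k => h (pair2 x y k) = pair2 (h x) (h y) k)); reflexivity.
Qed.

Lemma hom_join {L B : algebra lattice_sig} (h : L -> B) : is_hom L B h ->
  forall x y, h (ljoin L x y) = ljoin B (h x) (h y).
Proof. intros Hh x y. unfold ljoin. rewrite Hh. f_equal. apply pair2_map. Qed.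

Lemma hom_meet {L B : algebra lattice_sig} (h : L -> B) : is_hom L B h ->
  forall x y, h (lmeet L x y) = lmeet B (h x) (h y).
Proof. intros Hh x y. unfold lmeet. rewrite Hh. f_equal. apply pair2_map. Qed.

Lemma lattice_surj (L B : algebra lattice_sig) (h : L -> B) :
  is_lattice L -> is_hom L B h -> surjective h -> is_lattice B.
Proof.
  intros (H1&H2&H3&H4&H5&H6) Hh Hs.
  repeat split; intros;
  repeat match goal with v : carrier B |- _ => destruct (Hs v) as [? <-]; clear v end;
  repeat (rewrite <- (hom_join h Hh) || rewrite <- (hom_meet h Hh)); f_equal; auto.
Qed.

Lemma lattice_inj (L B : algebra lattice_sig) (h : B -> L) :
  is_lattice L -> is_hom B L h -> injective h -> is_lattice B.
Proof.
  intros (H1&H2&H3&H4&H5&H6) Hh Hi.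
  repeat split; intros; apply Hi; repeat (rewrite (hom_join h Hh) || rewrite (hom_meet h Hh)); auto.
Qed.

Lemma embed_surj {S} (L B : algebra lattice_sig) (A : algebra S) (h : L -> B)
  (f : L -> A -> A -> Prop) :
  is_hom L B h -> surjective h ->
  (forall x, is_congruence A (f x)) ->
  (forall x y, relext (f x) (f y) -> h x = h y) ->
  (forall x y, h x = h y -> relext (f x) (f y)) ->
  (forall x y, relext (f (ljoin L x y)) (con_join A (f x) (f y))) ->
  (forall x y, relext (f (lmeet L x y)) (con_meet A (f x) (f y))) ->
  embeds_into_Con B A.
Proof.
  intros Hh Hs Hc Hk1 Hk2 Hj Hm.
  pose (pre := fun b => proj1_sig (constructive_indefinite_description _ (Hs b))).
  assert (Hpre : forall b, h (pre b) = b)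
    by (intro b; exact (proj2_sig (constructive_indefinite_description _ (Hs b)))).
  exists (fun b => f (pre b)). split; [|split;[|split]].
  - intro; apply Hc.
  - intros x y E. rewrite <- (Hpre x), <- (Hpre y). apply Hk1. exact E.
  - intros x y a b.
    assert (E : h (pre (ljoin B x y)) = h (ljoin L (pre x) (pre y)))
      by (rewrite (hom_join h Hh); rewrite !Hpre; reflexivity).
    exact (iff_trans (Hk2 _ _ E a b) (Hj _ _ a b)).
  - intros x y a b.
    assert (E : h (pre (lmeet B x y)) = h (lmeet L (pre x) (pre y)))
      by (rewrite (hom_meet h Hh); rewrite !Hpre; reflexivity).
    exact (iff_trans (Hk2 _ _ E a b) (Hm _ _ a b)).
Qed.

Lemma choice_dep {I} {T : I -> Type} (P : forall i, T i -> Prop) :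
  (forall i, exists z, P i z) -> exists g : forall i, T i, forall i, P i (g i).
Proof.
  intro H. exists (fun i => proj1_sig (constructive_indefinite_description _ (H i))).
  intro i. exact (proj2_sig (constructive_indefinite_description _ (H i))).
Qed.

Lemma join_comp {S} (A : algebra S) al be : congruence_permutable A ->
  is_congruence A al -> is_congruence A be ->
  forall x y, con_join A al be x y <-> rel_comp al be x y.
Proof.
  intros Hp Ha Hb. pose proof Ha as (ar&asy&atr&ac). pose proof Hb as (br&bsy&btr&bc).
  assert (Hc : is_congruence A (rel_comp al be)).
  { split; [|split; [|split]].
    - intro x. exists x; auto.
    - intros x y [z [H1 H2]]. apply (Hp al be Ha Hb). exists z; auto.
    - intros x y w [z1 [H1 H2]] [z2 [H3 H4]].
      destruct (proj2 (Hp al be Ha Hb z1 z2) (ex_intro _ y (conj H2 H3))) as [z3 [H5 H6]].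
      exists z3; split; eauto.
    - intros o a b H.
      destruct (choice_dep (T := fun _ => carrier A) (fun k z => al (a k) z /\ be z (b k)) H) as [c Hc].
      exists (interp A o c). split; [apply ac|apply bc]; intro k; apply Hc. }
  intros x y; split.
  - intro H. apply (H _ Hc); intros u v Huv; [exists v | exists u]; auto.
  - intros [z [H1 H2]] ga (gr&gs&gt&gc) Hg1 Hg2. eauto.
Qed.

Definition unit_alg (S : signature) : algebra S := @Algebra S unit (fun _ _ => tt).

Definition emb_data {S} (L : algebra lattice_sig) (A : algebra S) (f : L -> (A -> A -> Prop)) :=
    (forall x, is_congruence A (f x)) /\
    (forall x y, (forall a b, f x a b <-> f y a b) -> x = y) /\
    (forall x y a b, f (ljoin L x y) a b <-> con_join A (f x) (f y) a b) /\
    (forall x y a b, f (lmeet L x y) a b <-> con_meet A (f x) (f y) a b).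

Lemma true_cong {S} (A : algebra S) : is_congruence A (fun _ _ => True).
Proof. repeat split. Qed.

Lemma Lcon_inh {S} (Q : alg_class S) (HQ : quasivariety Q) L : Lcon Q L ->
  exists A : algebra S, Q A /\ inhabited A /\ exists f, emb_data L A f.
Proof.
  intros [HL [A [QA Emb]]].
  destruct (classic (inhabited A)) as [Hi|Hn].
  - exists A; auto.
  - exists (unit_alg S). split; [apply (proj1 HQ); exists tt; intros []; reflexivity|].
    split; [constructor; exact tt|].
    destruct Emb as [f [Hc [Hinj _]]].
    exists (fun _ _ _ => True). split; [|split; [|split]].
    + intros; apply true_cong.
    + intros x y _. apply Hinj. intros a b. exfalso; apply Hn; constructor; exact a.
    + intros x y a b. split; intro; [intros ga Hga H1 H2; apply H1; exact I | exact I].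
    + intros. unfold con_meet. tauto.
Qed.

Lemma prod_join {I} (L : I -> algebra lattice_sig) (x y : prod_alg L) i :
  ljoin (prod_alg L) x y i = ljoin (L i) (x i) (y i).
Proof.
  unfold ljoin, prod_alg; simpl. f_equal. apply functional_extensionality; intro k.
  apply (Fin.caseS' k (fun k => pair2 x y k i = pair2 (x i) (y i) k)); reflexivity.
Qed.

Lemma prod_meet {I} (L : I -> algebra lattice_sig) (x y : prod_alg L) i :
  lmeet (prod_alg L) x y i = lmeet (L i) (x i) (y i).
Proof.
  unfold lmeet, prod_alg; simpl. f_equal. apply functional_extensionality; intro k.
  apply (Fin.caseS' k (fun k => pair2 x y k i = pair2 (x i) (y i) k)); reflexivity.
Qed.

Lemma prod_lattice {I} (L : I -> algebra lattice_sig) :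
  (forall i, is_lattice (L i)) -> is_lattice (prod_alg L).
Proof.
  intros HL. repeat split; intros; apply functional_extensionality_dep; intro i;
  repeat (rewrite prod_join || rewrite prod_meet); apply (HL i).
Qed.

Lemma extend {I} {T : I -> Type} (d : forall i, T i) (i : I) (a : T i) :
  exists g : forall j, T j, g i = a /\ forall j, i <> j -> g j = d j.
Proof.
  assert (H : forall j, exists z : T j,
     (forall e : i = j, z = eq_rect i T a j e) /\ (i <> j -> z = d j)).
  { intro j. destruct (classic (i = j)) as [e|n].
    - exists (eq_rect i T a j e). split.
      + intro e'. rewrite (proof_irrelevance _ e' e). reflexivity.
      + intro; contradiction.
    - exists (d j). split; [intro e; contradiction | auto]. }
  destruct (choice_dep _ H) as [g Hg]. exists g. split.
  - apply (proj1 (Hg i) eq_refl).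
  - intros j n; apply (proj2 (Hg j) n).
Qed.

Section UF.
End UF.

Lemma U_mono {I} (U : (I -> Prop) -> Prop) : ultrafilter U ->
  forall X Y : I -> Prop, U X -> (forall i, X i -> Y i) -> U Y.
Proof. intros (a&b&c&d&e); exact c. Qed.

Lemma U_and {I} (U : (I -> Prop) -> Prop) : ultrafilter U ->
  forall X Y : I -> Prop, U X -> U Y -> U (fun i => X i /\ Y i).
Proof. intros (a&b&c&d&e); exact d. Qed.

Lemma U_all {I} (U : (I -> Prop) -> Prop) : ultrafilter U ->
  forall X : I -> Prop, (forall i, X i) -> U X.
Proof. intros HU X H. apply (U_mono U HU (fun _ => True)); auto. apply HU. Qed.

Lemma U_iff {I} (U : (I -> Prop) -> Prop) : ultrafilter U ->
  forall X Y : I -> Prop, (forall i, X i <-> Y i) -> (U X <-> U Y).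
Proof. intros HU X Y H; split; intro H0; apply (U_mono U HU _ _ H0); apply H. Qed.

Lemma U_fin {I} (U : (I -> Prop) -> Prop) (HU : ultrafilter U) :
  forall n (X : Fin.t n -> I -> Prop), (forall k, U (X k)) -> U (fun i => forall k, X k i).
Proof.
  induction n; intros X HX.
  - apply U_all; auto. intros i k. exact (Fin.case0 (fun k => X k i) k).
  - assert (H := U_and U HU _ _ (HX Fin.F1) (IHn (fun k => X (Fin.FS k)) (fun k => HX (Fin.FS k)))).
    apply (U_mono U HU _ _ H). intros i [H1 H2] k.
    apply (Fin.caseS' k (fun k => X k i)); auto.
Qed.

Definition eqU {I} (U : (I -> Prop) -> Prop) {T : I -> Type} (f g : forall i, T i) : Prop :=
  U (fun i => f i = g i).

Lemma eqU_refl {I} U {T : I -> Type} (HU : ultrafilter U) (f : forall i, T i) : eqU U f f.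
Proof. unfold eqU; apply U_all; auto. Qed.
Lemma eqU_sym {I} U {T : I -> Type} (HU : ultrafilter U) (f g : forall i, T i) : eqU U f g -> eqU U g f.
Proof. unfold eqU; intro H; apply (U_mono U HU _ _ H); intros; auto. Qed.
Lemma eqU_trans {I} U {T : I -> Type} (HU : ultrafilter U) (f g h : forall i, T i) :
  eqU U f g -> eqU U g h -> eqU U f h.
Proof. unfold eqU; intros H1 H2. eapply U_mono; [eauto| apply (U_and U HU _ _ H1 H2)|]. intros i [-> ->]; auto. Qed.

Lemma U_transfer {I} U {T : I -> Type} (HU : ultrafilter U) (R : forall i, T i -> T i -> Prop)
  (c c' d d' : forall i, T i) : eqU U c c' -> eqU U d d' ->
  U (fun i => R i (c i) (d i)) -> U (fun i => R i (c' i) (d' i)).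
Proof.
  unfold eqU; intros H1 H2 H3. eapply U_mono; [eauto| apply (U_and U HU _ _ (U_and U HU _ _ H1 H2) H3)|].
  intros i [[<- <-] H]; auto.
Qed.

Definition ucar {I} (U : (I -> Prop) -> Prop) (T : I -> Type) :=
  { C : (forall i, T i) -> Prop | exists f, C = (fun g => eqU U f g) }.

Definition ucls {I} U {T : I -> Type} (f : forall i, T i) : ucar U T :=
  exist _ (fun g => eqU U f g) (ex_intro _ f eq_refl).

Definition urep {I} {U} {T : I -> Type} (C : ucar U T) : forall i, T i :=
  proj1_sig (constructive_indefinite_description _ (proj2_sig C)).

Lemma urep_spec {I} {U} {T : I -> Type} (C : ucar U T) :
  proj1_sig C = (fun g => eqU U (urep C) g).
Proof. exact (proj2_sig (constructive_indefinite_description _ (proj2_sig C))). Qed.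

Lemma ucar_eq {I} {U} {T : I -> Type} (C D : ucar U T) : proj1_sig C = proj1_sig D -> C = D.
Proof. destruct C, D; simpl; intro; subst; f_equal; apply proof_irrelevance. Qed.

Lemma ucls_eq {I} U {T : I -> Type} (HU : ultrafilter U) (f g : forall i, T i) :
  ucls U f = ucls U g <-> eqU U f g.
Proof.
  split.
  - intro E. apply (f_equal (@proj1_sig _ _)) in E. simpl in E.
    apply (f_equal (fun P => P g)) in E. rewrite E. apply eqU_refl; auto.
  - intro E. apply ucar_eq; simpl. apply functional_extensionality; intro h.
    apply propositional_extensionality; split; intro H.
    + eapply eqU_trans; eauto. apply eqU_sym; auto.
    + eapply eqU_trans; eauto.
Qed.

Lemma ucls_rep {I} U {T : I -> Type} (C : ucar U T) : ucls U (urep C) = C.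
Proof. apply ucar_eq; simpl. symmetry; apply urep_spec. Qed.

Lemma rep_cls {I} U {T : I -> Type} (HU : ultrafilter U) (f : forall i, T i) :
  eqU U (urep (ucls U f)) f.
Proof. apply (ucls_eq U HU). apply ucls_rep. Qed.

Definition ualg {S} {I} (U : (I -> Prop) -> Prop) (A : I -> algebra S) : algebra S :=
  @Algebra S (ucar U (fun i => carrier (A i)))
    (fun o args => ucls U (fun i => interp (A i) o (fun k => urep (args k) i))).

Lemma ualg_hom {S} {I} U (HU : ultrafilter U) (A : I -> algebra S) :
  is_hom (prod_alg A) (ualg U A) (fun f => ucls U f).
Proof.
  intros o args. simpl. apply (ucls_eq U HU). unfold eqU.
  eapply U_mono; [eauto| apply (U_fin U HU _ (fun k i => args k i = urep (ucls U (args k)) i))|].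
  - intro k. apply eqU_sym; auto. apply rep_cls; auto.
  - intros i H. f_equal. apply functional_extensionality; auto.
Qed.

Lemma ualg_surj {S} {I} U (A : I -> algebra S) :
  @surjective (prod_alg A) (ualg U A) (fun f => ucls U f).
Proof. intro C. exists (urep C). apply ucls_rep. Qed.

Theorem mainTheorem6 (S : signature) (Q : alg_class S) :
  quasivariety Q ->
  (forall A : algebra S, Q A -> congruence_permutable A) ->
  quasivariety (Lcon Q).
Proof.
  intros HQ Hperm.
  pose proof HQ as (Qtriv & Qiso & Qsub & Qprod & Qultra).
  split; [|split;[|split;[|split]]].
  -
    intros T [t Ht]. split.
    + repeat split; intros; transitivity t; [apply Ht| symmetry; apply Ht| apply Ht | symmetry; apply Ht
        | apply Ht| symmetry; apply Ht| apply Ht | symmetry; apply Ht| apply Ht | symmetry; apply Ht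
        | apply Ht| symmetry; apply Ht].
    + exists (unit_alg S). split; [apply Qtriv; exists tt; intros []; reflexivity|].
      exists (fun _ _ _ => True). split; [|split; [|split]].
      * intros; apply true_cong.
      * intros x y _. rewrite (Ht x), (Ht y). reflexivity.
      * intros x y a b. split; intro; [intros ga Hga H1 H2; apply H1; exact I | exact I].
      * intros. unfold con_meet. tauto.
  -
    intros L B [HL [A [QA [f [Hc [Hi [Hj Hm]]]]]]] [h [Hh [Hinj Hs]]].
    split; [eapply lattice_surj; eauto|]. exists A; split; auto.
    apply (embed_surj L B A h f Hh Hs Hc).
    + intros x y E. f_equal. apply Hi. exact E.
    + intros x y E. apply Hinj in E. subst. intros a b; split; auto.
    + exact Hj.
    + exact Hm.
  -
    intros L B h [HL [A [QA [f [Hc [Hi [Hj Hm]]]]]]] _ Hh Hinj.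
    split; [eapply lattice_inj; eauto|]. exists A; split; auto.
    exists (fun x => f (h x)). split;[intro; apply Hc|split;[|split]].
    + intros x y E; apply Hinj, Hi, E.
    + intros x y a b. rewrite (hom_join h Hh). apply Hj.
    + intros x y a b. rewrite (hom_meet h Hh). apply Hm.
  -
    intros I L HL.
    assert (H : forall i, exists A : algebra S, Q A /\ inhabited A /\ exists f, emb_data (L i) A f)
      by (intro i; apply Lcon_inh; auto).
    destruct (choice_dep (T := fun _ => algebra S) _ H) as [A HA].
    destruct (choice_dep (T := fun i => L i -> A i -> A i -> Prop)
                (fun i g => emb_data (L i) (A i) g) (fun i => proj2 (proj2 (HA i)))) as [f Hf].
    destruct (choice_dep (T := fun i => carrier (A i)) (fun _ _ => True)) as [d _].
    { intro i. destruct (proj1 (proj2 (HA i))) as [z]. exists z; auto. }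
    assert (QA : forall i, Q (A i)) by (intro; apply HA).
    assert (Fc : forall i x, is_congruence (A i) (f i x)) by (intro i; apply (Hf i)).
    assert (Fi : forall i x y, relext (f i x) (f i y) -> x = y) by (intro i; apply (Hf i)).
    assert (Fj : forall i x y a b, f i (ljoin (L i) x y) a b <-> con_join (A i) (f i x) (f i y) a b)
      by (intro i; apply (Hf i)).
    assert (Fm : forall i x y a b, f i (lmeet (L i) x y) a b <-> con_meet (A i) (f i x) (f i y) a b)
      by (intro i; apply (Hf i)).
    assert (Fjc : forall i x y a b, f i (ljoin (L i) x y) a b <-> rel_comp (f i x) (f i y) a b).
    { intros. eapply iff_trans; [apply Fj| apply join_comp; [apply Hperm, QA | apply Fc | apply Fc]]. }
    clear Hf HA H.
    split; [apply prod_lattice; intro; apply HL|].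
    exists (prod_alg A). split; [apply Qprod; auto|].
    pose (th := fun (x : prod_alg L) (a b : prod_alg A) => forall i, f i (x i) (a i) (b i)).
    assert (Hth : forall x, is_congruence (prod_alg A) (th x)).
    { intro x. unfold th. split; [|split;[|split]].
      - intros a i. destruct (Fc i (x i)) as (r&sy&tr&cp). apply r.
      - intros a b H0 i. destruct (Fc i (x i)) as (r&sy&tr&cp). apply sy, H0.
      - intros a b c H1 H2 i. destruct (Fc i (x i)) as (r&sy&tr&cp). eapply tr; [apply H1|apply H2].
      - intros o a b H0 i. simpl. destruct (Fc i (x i)) as (r&sy&tr&cp). apply cp.
        intro k. apply H0. }
    apply (embed_surj (prod_alg L) (prod_alg L) (prod_alg A) (fun x => x) th).
    + intros o args; reflexivity.
    + intro y; exists y; reflexivity.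
    + exact Hth.
    + intros x y E. apply functional_extensionality_dep; intro i.
      apply Fi. intros a b.
      destruct (extend d i a) as [ga [Ga1 Ga2]].
      destruct (extend ga i b) as [gb [Gb1 Gb2]].
      assert (K : forall z : prod_alg L, f i (z i) a b -> th z ga gb).
      { intros z Hz j. destruct (classic (i = j)) as [e|n].
        - subst j. rewrite Ga1, Gb1. exact Hz.
        - rewrite (Gb2 j n). destruct (Fc j (z j)) as (r&_). apply r. }
      split; intro H0.
      * rewrite <- Ga1, <- Gb1. exact (proj1 (E ga gb) (K x H0) i).
      * rewrite <- Ga1, <- Gb1. exact (proj2 (E ga gb) (K y H0) i).
    + intros x y E. subst. intros a b; split; auto.
    + intros x y a b.
      refine (iff_trans _ (iff_sym (join_comp _ _ _ (Hperm _ (Qprod _ _ QA)) (Hth x) (Hth y) a b))).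
      split.
      * intro H0.
        assert (H1 : forall i, exists z, f i (x i) (a i) z /\ f i (y i) z (b i)).
        { intro i. specialize (H0 i). rewrite prod_join in H0. idtac.
          apply Fjc in H0. exact H0. }
        destruct (choice_dep _ H1) as [c Hc]. exists c. split; intro i; apply Hc.
      * intros [c [H1 H2]] i. rewrite prod_join. apply Fjc. exists (c i). split; [apply H1|apply H2].
    + intros x y a b. unfold th, con_meet. split.
      * intro H0; split; intro i; specialize (H0 i); rewrite prod_meet in H0; apply Fm in H0; apply H0.
      * intros [H1 H2] i. rewrite prod_meet. apply Fm. split; auto.
  -
    intros I L U HU HL B h Hh Hs Hker.
    assert (H : forall i, exists A : algebra S, Q A /\ inhabited A /\ exists f, emb_data (L i) A f)
      by (intro i; apply Lcon_inh; auto).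
    destruct (choice_dep (T := fun _ => algebra S) _ H) as [A HA].
    destruct (choice_dep (T := fun i => L i -> A i -> A i -> Prop)
                (fun i g => emb_data (L i) (A i) g) (fun i => proj2 (proj2 (HA i)))) as [f Hf].
    destruct (choice_dep (T := fun i => carrier (A i)) (fun _ _ => True)) as [d _].
    { intro i. destruct (proj1 (proj2 (HA i))) as [z]. exists z; auto. }
    assert (QA : forall i, Q (A i)) by (intro; apply HA).
    assert (Fc : forall i x, is_congruence (A i) (f i x)) by (intro i; apply (Hf i)).
    assert (Fi : forall i x y, relext (f i x) (f i y) -> x = y) by (intro i; apply (Hf i)).
    assert (Fj : forall i x y a b, f i (ljoin (L i) x y) a b <-> con_join (A i) (f i x) (f i y) a b)
      by (intro i; apply (Hf i)).
    assert (Fm : forall i x y a b, f i (lmeet (L i) x y) a b <-> con_meet (A i) (f i x) (f i y) a b)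
      by (intro i; apply (Hf i)).
    assert (Fjc : forall i x y a b, f i (ljoin (L i) x y) a b <-> rel_comp (f i x) (f i y) a b).
    { intros. eapply iff_trans; [apply Fj| apply join_comp; [apply Hperm, QA | apply Fc | apply Fc]]. }
    clear Hf HA H.
    assert (QU : Q (ualg U A)).
    { apply (Qultra I A U HU QA (ualg U A) (fun g => ucls U g));
        [apply ualg_hom; auto| apply ualg_surj| intros; apply ucls_eq; auto]. }
    split; [apply (lattice_surj (prod_alg L) B h); auto; apply prod_lattice; intro; apply HL|].
    exists (ualg U A). split; auto.
    pose (th := fun (x : prod_alg L) (C D : ualg U A) => U (fun i => f i (x i) (urep C i) (urep D i))).
    assert (Hcls : forall x a c, th x (ucls U a) (ucls U c) <-> U (fun i => f i (x i) (a i) (c i))).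
    { intros x a c; unfold th; split; intro H0.
      - apply (U_transfer U HU (fun i => f i (x i)) (urep (ucls U a)) a (urep (ucls U c)) c);
          [apply rep_cls; auto | apply rep_cls; auto | exact H0].
      - apply (U_transfer U HU (fun i => f i (x i)) a (urep (ucls U a)) c (urep (ucls U c)));
          [apply eqU_sym; auto; apply rep_cls; auto | apply eqU_sym; auto; apply rep_cls; auto | exact H0]. }
    assert (Hth : forall x, is_congruence (ualg U A) (th x)).
    { intro x. split; [|split;[|split]].
      - intro C. unfold th. apply U_all; auto. intro i. destruct (Fc i (x i)) as (r&sy&tr&cp). apply r.
      - intros C D H0. unfold th in *. apply (U_mono U HU _ _ H0). intros i. destruct (Fc i (x i)) as (r&sy&tr&cp). apply sy.
      - intros C D E H1 H2. unfold th in *. apply (U_mono U HU _ _ (U_and U HU _ _ H1 H2)). intros i [G1 G2].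
        destruct (Fc i (x i)) as (r&sy&tr&cp). eapply tr; eauto.
      - intros o a b H0. apply (proj2 (Hcls x _ _)).
        apply (U_mono U HU _ _ (U_fin U HU _ (fun k i => f i (x i) (urep (a k) i) (urep (b k) i)) H0)).
        intros i Hi. destruct (Fc i (x i)) as (r&sy&tr&cp). apply cp. exact Hi. }
    apply (embed_surj (prod_alg L) B (ualg U A) h th Hh Hs Hth).
    + intros x y E. apply Hker. apply NNPP; intro Hne.
      pose proof HU as (_&Hf0&_&_&Hc).
      assert (Hne' : U (fun i => ~ x i = y i)) by (destruct (Hc (fun i => x i = y i)); tauto).
      assert (Hp : forall i, exists p : (A i * A i)%type, x i <> y i ->
                 ~ (f i (x i) (fst p) (snd p) <-> f i (y i) (fst p) (snd p))).
      { intro i. destruct (classic (x i = y i)) as [e|ne].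
        - exists (d i, d i); intro; contradiction.
        - destruct (classic (exists p : (A i * A i)%type,
                      ~ (f i (x i) (fst p) (snd p) <-> f i (y i) (fst p) (snd p)))) as [[p Hp]|Hn].
          + exists p; auto.
          + exfalso; apply ne; apply Fi; intros a c; apply NNPP; intro Hx; apply Hn; exists (a, c); exact Hx. }
      destruct (choice_dep (T := fun i => (A i * A i)%type) _ Hp) as [p Hp'].
      pose (a := fun i => fst (p i)); pose (c := fun i => snd (p i)).
      assert (E' : U (fun i => f i (x i) (a i) (c i)) <-> U (fun i => f i (y i) (a i) (c i))).
      { eapply iff_trans; [apply iff_sym, Hcls|]. eapply iff_trans; [apply E|apply Hcls]. }
      apply Hf0.
      destruct (Hc (fun i => f i (x i) (a i) (c i) /\ ~ f i (y i) (a i) (c i))) as [HZ|HZ].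
      * assert (Hx : U (fun i => f i (x i) (a i) (c i))) by (apply (U_mono U HU _ _ HZ); tauto).
        apply (U_mono U HU _ _ (U_and U HU _ _ HZ (proj1 E' Hx))). tauto.
      * assert (HW : U (fun i => ~ f i (x i) (a i) (c i) /\ f i (y i) (a i) (c i))).
        { apply (U_mono U HU _ _ (U_and U HU _ _ HZ Hne')). intros i [Z1 Z2].
          specialize (Hp' i Z2). unfold a, c in *.
          destruct (classic (f i (x i) (fst (p i)) (snd (p i)))),
                   (classic (f i (y i) (fst (p i)) (snd (p i)))); tauto. }
        assert (Hy : U (fun i => f i (y i) (a i) (c i))) by (apply (U_mono U HU _ _ HW); tauto).
        apply (U_mono U HU _ _ (U_and U HU _ _ HW (proj2 E' Hy))). tauto.
    + intros x y E. apply Hker in E. intros C D. unfold th. split; intro H0;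
        apply (U_mono U HU _ _ (U_and U HU _ _ E H0)); intros i [e G]; [rewrite <- e | rewrite e]; exact G.
    + intros x y C D.
      refine (iff_trans _ (iff_sym (join_comp _ _ _ (Hperm _ QU) (Hth x) (Hth y) C D))).
      assert (G : th (ljoin (prod_alg L) x y) C D <->
                  U (fun i => rel_comp (f i (x i)) (f i (y i)) (urep C i) (urep D i))).
      { unfold th. apply U_iff; auto. intro i. rewrite prod_join. apply Fjc. }
      eapply iff_trans; [exact G|]. split.
      * intro H0.
        assert (He : forall i, exists z : A i,
                   rel_comp (f i (x i)) (f i (y i)) (urep C i) (urep D i) ->
                   f i (x i) (urep C i) z /\ f i (y i) z (urep D i)).
        { intro i. destruct (classic (rel_comp (f i (x i)) (f i (y i)) (urep C i) (urep D i)))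
            as [[z Hz]|Hn]; [exists z; auto | exists (d i); tauto]. }
        destruct (choice_dep _ He) as [e He']. exists (ucls U e). unfold th. split.
        -- apply (U_transfer U HU (fun i => f i (x i)) (urep C) (urep C) e (urep (ucls U e)));
             [apply eqU_refl; auto| apply eqU_sym; auto; apply rep_cls; auto|].
           apply (U_mono U HU _ _ H0). intros i Hi. apply (He' i Hi).
        -- apply (U_transfer U HU (fun i => f i (y i)) e (urep (ucls U e)) (urep D) (urep D));
             [apply eqU_sym; auto; apply rep_cls; auto| apply eqU_refl; auto|].
           apply (U_mono U HU _ _ H0). intros i Hi. apply (He' i Hi).
      * intros [E0 [H1 H2]]. unfold th in H1, H2.
        apply (U_mono U HU _ _ (U_and U HU _ _ H1 H2)). intros i [G1 G2]. exists (urep E0 i); auto.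
    + intros x y C D. unfold th, con_meet. split.
      * intro H0; split; apply (U_mono U HU _ _ H0); intros i Hi; rewrite prod_meet in Hi;
          apply Fm in Hi; apply Hi.
      * intros [H1 H2]. apply (U_mono U HU _ _ (U_and U HU _ _ H1 H2)). intros i Hi.
        rewrite prod_meet. apply Fm. exact Hi.
Qed.
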